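(* Let $0\to V\to\widehat A\xrightarrow{j}A\to0$ be an abelian extension of a Com-PreLie algebra $A$ by a representation $(V,\mu,l,r)$ inducing that representation. Then there is an exact sequence $$0\longrightarrow\mathcal Z^1(A,V)\xrightarrow{\ \iota\ }\mathrm{Aut}_V(\widehat A)\xrightarrow{\ \tau\ }\mathcal C\xrightarrow{\ \mathcal W\ }\mathcal H^2(A,V),$$ where $\iota$ is the injective group homomorphism obtained by composing the isomorphism $\mathcal Z^1(A,V)\cong\mathrm{Aut}^A_V(\widehat A)$ (inverse of $\gamma\mapsto\gamma s-s$) with the inclusion $\mathrm{Aut}^A_V(\widehat A)\subseteq\mathrm{Aut}_V(\widehat A)$. Exactness means: $\iota$ is injective; $\tau$ takes values in $\mathcal C$ and $\ker\tau=\iota(\mathcal Z^1(A,V))$; and $\tau(\mathrm{Aut}_V(\widehat A))=\{(\beta,\alpha)\in\mathcal C:\mathcal W(\beta,\alpha)=0\}$.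
   Context: All vector spaces are over a field of characteristic $0$. A Com-PreLie algebra is a triple $(A,\ast,\bullet)$ where $A$ is a vector space, $\ast$ is a commutative associative bilinear product on $A$, and $\bullet$ is a bilinear product on $A$ satisfying the left pre-Lie identity $(x\bullet y)\bullet z-x\bullet(y\bullet z)=(y\bullet x)\bullet z-y\bullet(x\bullet z)$ and the compatibility $x\bullet(y\ast z)=(x\bullet y)\ast z+y\ast(x\bullet z)$ for all $x,y,z\in A$. A homomorphism of Com-PreLie algebras is a linear map preserving both products. A representation of $A$ is a quadruple $(V,\mu,l,r)$ with $V$ a vector space and $\mu,l,r:A\to\mathrm{End}(V)$ linear maps satisfying, for all $x,y\in A$: $\mu(x\ast y)=\mu(x)\mu(y)$; $l(x\bullet y)-l(x)l(y)=l(y\bullet x)-l(y)l(x)$; $r(y)l(x)-l(x)r(y)=r(y)r(x)-r(x\bullet y)$; $l(x)\mu(y)=\mu(x\bullet y)+\mu(y)l(x)$; $r(x\ast y)=\mu(y)r(x)+\mu(x)r(y)$. A 2-cocycle of $A$ with coefficients in $V$ is a pair $(\phi,\psi)$ of bilinear maps $A\times A\to V$, with $\phi$ symmetric, such that for all $x,y,z\in A$: (C1) $\phi(x,y\ast z)+\mu(x)\phi(y,z)-\phi(x\ast y,z)-\mu(z)\phi(x,y)=0$; (C2) $\psi(x\bullet y,z)+r(z)\psi(x,y)-\psi(x,y\bullet z)-l(x)\psi(y,z)-\psi(y\bullet x,z)-r(z)\psi(y,x)+\psi(y,x\bullet z)+l(y)\psi(x,z)=0$; (C3) $\psi(x,y\ast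 z)+l(x)\phi(y,z)-\phi(x\bullet y,z)-\mu(z)\psi(x,y)-\phi(y,x\bullet z)-\mu(y)\psi(x,z)=0$. A 2-coboundary is a pair $(x,y)\mapsto(\mu(x)f(y)-f(x\ast y)+\mu(y)f(x),\ l(x)f(y)-f(x\bullet y)+r(y)f(x))$ for a linear $f:A\to V$; $\mathcal H^2(A,V)$ is the quotient of the space of 2-cocycles by the subspace of 2-coboundaries. $\mathcal Z^1(A,V)$ is the additive group of linear maps $N:A\to V$ with $\mu(x)N(y)-N(x\ast y)+\mu(y)N(x)=0$ and $l(x)N(y)-N(x\bullet y)+r(y)N(x)=0$ for all $x,y$. An abelian extension of $A$ by $V$ is a Com-PreLie algebra $(\widehat A,\ast_{\widehat A},\bullet_{\widehat A})$ with a short exact sequence $0\to V\xrightarrow{i}\widehat A\xrightarrow{j}A\to0$ of Com-PreLie algebra homomorphisms, $V$ carrying the zero products; $V$ is identified with $i(V)=\ker j$. It induces the given representation if for any linear section $s$ of $j$ ($j\circ s=\mathrm{id}_A$): $\mu(x)u=s(x)\ast_{\widehat A}u$, $l(x)u=s(x)\bullet_{\widehat A}u$, $r(x)u=u\bullet_{\widehat A}s(x)$. Fix such a section $s$ and let $(\phi,\psi)$ be the 2-cocycle $\phi(x,y)=s(x)\ast_{\widehat A}s(y)-s(x\ast y)$, $\psi(x,y)=s(x)\bullet_{\widehat A}s(y)-s(x\bullet y)$. $\mathrm{Aut}(A)$ is the group of Com-PreLie algebra automorphisms of $A$; $\mathrm{Aut}(V)$ is the group of linear automorphisms of $V$; $\mathrm{Aut}_V(\widehat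 A)$ is the group of Com-PreLie algebra automorphisms $\gamma$ of $\widehat A$ with $\gamma(V)=V$, and $\mathrm{Aut}^A_V(\widehat A)$ its subgroup of those with $\gamma|_V=\mathrm{id}_V$ and $j\gamma s=\mathrm{id}_A$. The map $\tau:\mathrm{Aut}_V(\widehat A)\to\mathrm{Aut}(V)\times\mathrm{Aut}(A)$ is $\tau(\gamma)=(\gamma|_V,j\gamma s)$. $\mathcal C$ is the group of pairs $(\beta,\alpha)\in\mathrm{Aut}(V)\times\mathrm{Aut}(A)$ with $\beta(\mu(x)u)=\mu(\alpha(x))\beta(u)$, $\beta(l(x)u)=l(\alpha(x))\beta(u)$, $\beta(r(x)u)=r(\alpha(x))\beta(u)$ for all $x\in A,u\in V$. For $(\beta,\alpha)\in\mathcal C$, $(\phi,\psi)^{(\beta,\alpha)}$ is the 2-cocycle $(x,y)\mapsto\big(\beta\phi(\alpha^{-1}x,\alpha^{-1}y),\ \beta\psi(\alpha^{-1}x,\alpha^{-1}y)\big)$, and the Wells map is $\mathcal W(\beta,\alpha)=\big[(\phi,\psi)^{(\beta,\alpha)}-(\phi,\psi)\big]\in\mathcal H^2(A,V)$ (independent of $s$). *)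

(* Defs.v *)
From HB Require Import structures.
From mathcomp Require Import all_boot all_order all_algebra.
Set Implicit Arguments. Unset Strict Implicit. Unset Printing Implicit Defensive.
Import GRing.Theory.
Local Open Scope ring_scope.

Section ComPreLieDefs.
Variable F : fieldType.

Definition lin (U W : lmodType F) (f : U -> W) : Prop :=
  forall (a : F) (x y : U), f (a *: x + y) = a *: f x + f y.

Definition bilin (U W X : lmodType F) (f : U -> W -> X) : Prop :=
  (forall x, lin (f x)) /\ (forall y, lin (fun x => f x y)).

Definition lin_op (A V : lmodType F) (m : A -> V -> V) : Prop :=
  (forall x, lin (m x)) /\
  (forall (a : F) (x y : A) (u : V), m (a *: x + y) u = a *: m x u + m y u).

Definition is_ComPreLie (A : lmodType F) (st bu : A -> A -> A) : Prop :=
  ((bilin st) /\ (bilin bu) /\ ((forall x y, st x y = st y x)) /\ ((forall x y z, st x (st y z) = st (st x y) z)) /\ ((forall x y z, bu (bu x y) z - bu x (bu y z) = bu (bu y x) z - bu y (bu x z))) /\ ((forall x y z, bu x (st y z) = st (bu x y) z + st y (bu x z)))).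

Definition is_rep (A V : lmodType F) (st bu : A -> A -> A)
    (mu l r : A -> V -> V) : Prop :=
  ((lin_op mu) /\ (lin_op l) /\ (lin_op r) /\ ((forall x y u, mu (st x y) u = mu x (mu y u))) /\ ((forall x y u, l (bu x y) u - l x (l y u) = l (bu y x) u - l y (l x u))) /\ ((forall x y u, r y (l x u) - l x (r y u) = r y (r x u) - r (bu x y) u)) /\ ((forall x y u, l x (mu y u) = mu (bu x y) u + mu y (l x u))) /\ ((forall x y u, r (st x y) u = mu y (r x u) + mu x (r y u)))).

Variables (A V Ah : lmodType F) (st bu : A -> A -> A) (hs hb : Ah -> Ah -> Ah)
  (mu l r : A -> V -> V) (i : V -> Ah) (j : Ah -> A).

Definition is_abelian_ext : Prop :=
  ((is_ComPreLie hs hb) /\ (lin i) /\ (lin j) /\ (injective i) /\ ((forall x : A, exists w, j w = x)) /\ ((forall w, j w = 0 <-> exists u, w = i u)) /\ ((forall u v, hs (i u) (i v) = i 0 /\ hb (i u) (i v) = i 0)) /\ ((forall w w', j (hs w w') = st (j w) (j w') /\ j (hb w w') = bu (j w) (j w')))).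

Definition induces_rep : Prop :=
  forall s : A -> Ah, lin s -> (forall x, j (s x) = x) ->
  forall x u, ((i (mu x u) = hs (s x) (i u)) /\ (i (l x u) = hb (s x) (i u)) /\ (i (r x u) = hb (i u) (s x))).

Definition Z1 (N : A -> V) : Prop :=
  ((lin N) /\ ((forall x y, mu x (N y) - N (st x y) + mu y (N x) = 0)) /\ ((forall x y, l x (N y) - N (bu x y) + r y (N x) = 0))).

Definition is_coboundary (phi psi : A -> A -> V) : Prop :=
  exists f : A -> V, lin f /\
    forall x y, phi x y = mu x (f y) - f (st x y) + mu y (f x) /\
                psi x y = l x (f y) - f (bu x y) + r y (f x).

Definition AutV (g : Ah -> Ah) : Prop :=
  ((lin g) /\ (bijective g) /\ ((forall w w', g (hs w w') = hs (g w) (g w') /\ g (hb w w') = hb (g w) (g w'))) /\ ((forall u, exists u', g (i u) = i u')) /\ ((forall u, exists u', i u = g (i u')))).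

Definition AutA (a : A -> A) : Prop :=
  (lin a) /\ (bijective a) /\
  (forall x y, a (st x y) = st (a x) (a y) /\ a (bu x y) = bu (a x) (a y)).

Definition AutVec (b : V -> V) : Prop := lin b /\ bijective b.

Definition tau_rel (s : A -> Ah) (g : Ah -> Ah) (b : V -> V) (a : A -> A) : Prop :=
  (forall u, i (b u) = g (i u)) /\ (forall x, a x = j (g (s x))).

Definition inC (b : V -> V) (a : A -> A) : Prop :=
  (AutVec b) /\ (AutA a) /\
  (forall x u, [/\ b (mu x u) = mu (a x) (b u),
                   b (l x u) = l (a x) (b u)
                 & b (r x u) = r (a x) (b u)]).

(* Wells map W(b,a) = [(phi,psi)^(b,a) - (phi,psi)] vanishes in H^2 *)
Definition wells_zero (phi psi : A -> A -> V) (b : V -> V) (a : A -> A) : Prop :=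
  forall ainv : A -> A, cancel a ainv -> cancel ainv a ->
  is_coboundary (fun x y => b (phi (ainv x) (ainv y)) - phi x y)
                (fun x y => b (psi (ainv x) (ainv y)) - psi x y).

(* iotaZ : Z^1(A,V) -> Aut_V(Ah), the inverse of g |-> g s - s composed
   with the inclusion; explicitly iotaZ N = id + i N j *)
Definition iotaZ (N : A -> V) : Ah -> Ah := fun w => w + i (N (j w)).

End ComPreLieDefs.

(* Main.v *)
Require Import Defs.
From mathcomp Require Import all_boot all_order all_algebra.
From Stdlib Require Import ClassicalEpsilon.
Set Implicit Arguments. Unset Strict Implicit. Unset Printing Implicit Defensive.
Import GRing.Theory.
Local Open Scope ring_scope.

Section Lin.
Variable F : fieldType.
Implicit Types U W X : lmodType F.

Lemma linD U W (f : U -> W) : lin f -> forall x y, f (x + y) = f x + f y.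
Proof. by move=> Hf x y; rewrite -[x in LHS]scale1r Hf scale1r. Qed.
Lemma lin0 U W (f : U -> W) : lin f -> f 0 = 0.
Proof. move=> Hf; have h := linD Hf 0 0; rewrite addr0 in h.
by apply: (addrI (f 0)); rewrite addr0 -h. Qed.
Lemma linN U W (f : U -> W) : lin f -> forall x, f (- x) = - f x.
Proof. move=> Hf x; apply: (addrI (f x)); by rewrite -(linD Hf) !subrr (lin0 Hf). Qed.
Lemma linB U W (f : U -> W) : lin f -> forall x y, f (x - y) = f x - f y.
Proof. by move=> Hf x y; rewrite (linD Hf) (linN Hf). Qed.
Lemma linZ U W (f : U -> W) : lin f -> forall a x, f (a *: x) = a *: f x.
Proof. by move=> Hf a x; rewrite -[a *: x]addr0 Hf (lin0 Hf) addr0. Qed.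
Lemma lin_comp U W X (f : U -> W) (g : W -> X) : lin f -> lin g -> lin (fun x => g (f x)).
Proof. by move=> Hf Hg a x y; rewrite Hf Hg. Qed.
Lemma lin_add U W (f g : U -> W) : lin f -> lin g -> lin (fun x => f x + g x).
Proof. by move=> Hf Hg a x y; rewrite Hf Hg scalerDr addrACA. Qed.
Lemma lin_sub U W (f g : U -> W) : lin f -> lin g -> lin (fun x => f x - g x).
Proof. by move=> Hf Hg a x y; rewrite Hf Hg scalerBr opprD addrACA. Qed.
Lemma lin_id U : lin (fun x : U => x). Proof. by []. Qed.
Lemma lin_inv U W (f : U -> W) g : lin f -> cancel f g -> cancel g f -> lin g.
Proof. move=> Hf fK gK a x y; apply: (can_inj fK); by rewrite Hf !gK. Qed.
End Lin.

Section Main.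
Variables (F : fieldType) (A V Ah : lmodType F)
  (st bu : A -> A -> A) (hs hb : Ah -> Ah -> Ah)
  (mu l r : A -> V -> V) (i : V -> Ah) (j : Ah -> A)
  (s : A -> Ah) (phi psi : A -> A -> V).
Hypotheses (hsL : forall w, lin (hs w)) (hsR : forall w', lin (fun w => hs w w'))
  (hsC : forall w w', hs w w' = hs w' w)
  (hbL : forall w, lin (hb w)) (hbR : forall w', lin (fun w => hb w w'))
  (muL : forall x, lin (mu x)) (lL : forall x, lin (l x)) (rL : forall x, lin (r x))
  (iL : lin i) (jL : lin j) (iI : injective i)
  (kerj : forall w, j w = 0 <-> exists u, w = i u)
  (z0 : forall u v, hs (i u) (i v) = i 0 /\ hb (i u) (i v) = i 0)
  (jhom : forall w w', j (hs w w') = st (j w) (j w') /\ j (hb w w') = bu (j w) (j w'))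
  (ind_mu : forall x u, i (mu x u) = hs (s x) (i u))
  (ind_l : forall x u, i (l x u) = hb (s x) (i u))
  (ind_r : forall x u, i (r x u) = hb (i u) (s x))
  (sL : lin s) (js : forall x, j (s x) = x)
  (Hphi : forall x y, i (phi x y) = hs (s x) (s y) - s (st x y))
  (Hpsi : forall x y, i (psi x y) = hb (s x) (s y) - s (bu x y)).

Lemma hsDl w1 w2 w' : hs (w1 + w2) w' = hs w1 w' + hs w2 w'.
Proof. exact: (linD (hsR w')). Qed.
Lemma hsDr w w1 w2 : hs w (w1 + w2) = hs w w1 + hs w w2.
Proof. exact: (linD (hsL w)). Qed.
Lemma hbDl w1 w2 w' : hb (w1 + w2) w' = hb w1 w' + hb w2 w'.
Proof. exact: (linD (hbR w')). Qed.
Lemma hbDr w w1 w2 : hb w (w1 + w2) = hb w w1 + hb w w2.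
Proof. exact: (linD (hbL w)). Qed.

Lemma i0 : i 0 = 0. Proof. exact: lin0. Qed.
Lemma ji u : j (i u) = 0. Proof. by apply/kerj; exists u. Qed.
Lemma hsii u v : hs (i u) (i v) = 0. Proof. by rewrite (z0 u v).1 i0. Qed.
Lemma hbii u v : hb (i u) (i v) = 0. Proof. by rewrite (z0 u v).2 i0. Qed.

Definition invi (w : Ah) : V := epsilon (inhabits 0) (fun v => i v = w).
Lemma invi_spec w u : i u = w -> i (invi w) = w.
Proof. move=> h; apply: (epsilon_spec (inhabits 0) (fun v => i v = w)); by exists u. Qed.
Lemma invi_ker w : j w = 0 -> i (invi w) = w.
Proof. by case/kerj => u hu; apply: (invi_spec (esym hu)). Qed.
Lemma inviK u : invi (i u) = u.
Proof. by apply: iI; apply: (invi_spec (erefl _)). Qed.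

Definition pi w := invi (w - s (j w)).
Lemma pi_spec w : i (pi w) = w - s (j w).
Proof. by apply: invi_ker; rewrite (linB jL) js subrr. Qed.
Lemma decomp w : w = s (j w) + i (pi w).
Proof. by rewrite pi_spec addrC subrK. Qed.
Lemma j_si x u : j (s x + i u) = x.
Proof. by rewrite (linD jL) js ji addr0. Qed.
Lemma pi_si x u : pi (s x + i u) = u.
Proof. by apply: iI; rewrite pi_spec j_si addrAC subrr add0r. Qed.
Lemma pi_lin : lin pi.
Proof.
move=> a w w'; apply: iI; rewrite (iL a) !pi_spec.
exact: (lin_sub (@lin_id _ Ah) (lin_comp jL sL) a w w').
Qed.

Lemma hs_i w u : hs w (i u) = i (mu (j w) u).
Proof. by rewrite {1}(decomp w) hsDl hsii addr0 -ind_mu. Qed.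
Lemma i_hs u w : hs (i u) w = i (mu (j w) u).
Proof. by rewrite hsC hs_i. Qed.
Lemma hb_i w u : hb w (i u) = i (l (j w) u).
Proof. by rewrite {1}(decomp w) hbDl hbii addr0 -ind_l. Qed.
Lemma i_hb u w : hb (i u) w = i (r (j w) u).
Proof. by rewrite {1}(decomp w) hbDr hbii addr0 -ind_r. Qed.

Lemma hs_ss x y : hs (s x) (s y) = s (st x y) + i (phi x y).
Proof. by rewrite Hphi addrC subrK. Qed.
Lemma hb_ss x y : hb (s x) (s y) = s (bu x y) + i (psi x y).
Proof. by rewrite Hpsi addrC subrK. Qed.

Lemma hs_si x p y q :
  hs (s x + i p) (s y + i q) = s (st x y) + i (phi x y + mu x q + mu y p).
Proof.
by rewrite hsDl hsDr i_hs hs_i j_si js hs_ss !(linD iL) !addrA.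
Qed.
Lemma hb_si x p y q :
  hb (s x + i p) (s y + i q) = s (bu x y) + i (psi x y + l x q + r y p).
Proof.
by rewrite hbDl hbDr i_hb hb_i j_si js hb_ss !(linD iL) !addrA.
Qed.


Lemma part1 N : Z1 st bu mu l r N ->
  AutV hs hb i (iotaZ i j N) /\ tau_rel i j s (iotaZ i j N) id id /\
  (forall x, iotaZ i j N (s x) - s x = i (N x)).
Proof.
case=> NL [Nmu Nl].
have gi u : iotaZ i j N (i u) = i u by rewrite /iotaZ ji (lin0 NL) i0 addr0.
have jg w : j (iotaZ i j N w) = j w by rewrite /iotaZ (linD jL) ji addr0.
split; [|split].
- split; [|split; [|split; [|split]]].
  + exact: (lin_add (@lin_id _ Ah) (lin_comp (lin_comp jL NL) iL)).
  + exists (fun w => w - i (N (j w))) => w; rewrite /iotaZ.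
    * by rewrite (linD jL) ji addr0 addrK.
    * by rewrite (linB jL) ji subr0 subrK.
  + move=> w w'; rewrite /iotaZ; have [e1 e2] := jhom w w'; rewrite e1 e2; split.
    * rewrite hsDl !hsDr hsii addr0 hs_i i_hs -addrA -(linD iL); congr (_ + i _).
      by have := Nmu (j w) (j w'); rewrite addrAC => /subr0_eq.
    * rewrite hbDl !hbDr hbii addr0 hb_i i_hb -addrA -(linD iL); congr (_ + i _).
      by have := Nl (j w) (j w'); rewrite addrAC => /subr0_eq.
  + by move=> u; exists u; rewrite gi.
  + by move=> u; exists u; rewrite gi.
- by split => [u|x] /=; [rewrite gi | rewrite jg js].
- by move=> x; rewrite /iotaZ js addrC addKr.
Qed.

Lemma part2a N1 N2 : Z1 st bu mu l r N1 -> Z1 st bu mu l r N2 ->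
  (forall w, iotaZ i j N1 w = iotaZ i j N2 w) -> forall x, N1 x = N2 x.
Proof. move=> _ _ h x; apply: iI; have := h (s x); rewrite /iotaZ js; exact: addrI. Qed.

Lemma part2b N1 N2 : Z1 st bu mu l r N1 -> Z1 st bu mu l r N2 ->
  forall w, iotaZ i j (fun x => N1 x + N2 x) w = iotaZ i j N1 (iotaZ i j N2 w).
Proof.
case=> [N1L _] [N2L _] w.
by rewrite /iotaZ (linD jL) ji addr0 (linD iL) addrA addrAC.
Qed.


Lemma autv_inC g b a : AutV hs hb i g -> tau_rel i j s g b a ->
  inC st bu mu l r b a.
Proof.
case=> gL [[ginv gK ginvK] [ghom [gi1 gi2]]] [hbE haE].
have ginvL : lin ginv := lin_inv gL gK ginvK.
have gker w : j w = 0 -> j (g w) = 0.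
  by case/kerj => u ->; case: (gi1 u) => u' ->; rewrite ji.
have ginvker w : j w = 0 -> j (ginv w) = 0.
  by case/kerj => u ->; case: (gi2 u) => u' ->; rewrite gK ji.
have jcongr h : lin h -> (forall w, j w = 0 -> j (h w) = 0) ->
    forall w1 w2, j w1 = j w2 -> j (h w1) = j (h w2).
  move=> hL hk w1 w2 e; apply/eqP; rewrite -subr_eq0 -(linB jL) -(linB hL).
  by apply/eqP; apply: hk; rewrite (linB jL) e subrr.
split; [|split].
- split.
  + by move=> c u v; apply: iI; rewrite hbE iL gL iL !hbE.
  + have ci u : i (invi (ginv (i u))) = ginv (i u).
      by case: (gi2 u) => u' ->; rewrite gK inviK.
    exists (fun u => invi (ginv (i u))) => u; apply: iI.
    * by rewrite ci hbE gK.
    * by rewrite hbE ci ginvK.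
- split; [|split].
  + by move=> c x y; rewrite !haE sL gL jL.
  + exists (fun x => j (ginv (s x))) => x.
    * rewrite haE (jcongr _ ginvL ginvker (s (j (g (s x)))) (g (s x))); last by rewrite js.
      by rewrite gK js.
    * rewrite haE (jcongr _ gL gker (s (j (ginv (s x)))) (ginv (s x))); last by rewrite js.
      by rewrite ginvK js.
  + move=> x y; rewrite !haE; split.
    * rewrite (jcongr _ gL gker (s (st x y)) (hs (s x) (s y))); last by rewrite js (jhom _ _).1 !js.
      by rewrite (ghom _ _).1 (jhom _ _).1.
    * rewrite (jcongr _ gL gker (s (bu x y)) (hb (s x) (s y))); last by rewrite js (jhom _ _).2 !js.
      by rewrite (ghom _ _).2 (jhom _ _).2.
- move=> x u; split; apply: iI.
  + by rewrite hbE ind_mu (ghom _ _).1 -hbE hs_i haE.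
  + by rewrite hbE ind_l (ghom _ _).2 -hbE hb_i haE.
  + by rewrite hbE ind_r (ghom _ _).2 -hbE i_hb haE.
Qed.

Lemma autv_tau g : AutV hs hb i g ->
  exists b a, tau_rel i j s g b a /\ inC st bu mu l r b a.
Proof.
move=> Hg.
have Hb u : i (invi (g (i u))) = g (i u).
  by case: Hg => _ [_ [_ [gi1 _]]]; case: (gi1 u) => u' e; apply: (invi_spec (esym e)).
have T : tau_rel i j s g (fun u => invi (g (i u))) (fun x => j (g (s x))) by split.
exists (fun u => invi (g (i u))); exists (fun x => j (g (s x))).
split; [exact: T | exact: autv_inC Hg T].
Qed.


Lemma part4 g : AutV hs hb i g ->
  (tau_rel i j s g id id <->
   exists N, Z1 st bu mu l r N /\ forall w, g w = iotaZ i j N w).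
Proof.
move=> Hg; split.
- case: Hg => gL [_ [ghom _]] [gi gs].
  pose N x := invi (g (s x) - s x).
  have NE x : i (N x) = g (s x) - s x.
    by apply: invi_ker; rewrite (linB jL) js -(gs x) subrr.
  have gsE x : g (s x) = s x + i (N x) by rewrite NE addrC subrK.
  have gsi x u : g (s x + i u) = s x + i (N x + u).
    by rewrite (linD gL) gsE -gi (linD iL) addrA.
  exists N; split.
  + split; [|split].
    * move=> c x y; apply: iI; rewrite NE iL !NE sL gL.
      by rewrite scalerBr opprD addrACA.
    * move=> x y; have e := (ghom (s x) (s y)).1.
      rewrite hs_ss (linD gL) !gsE -gi hs_si -addrA in e.
      move/addrI: e; rewrite -(linD iL) => /iI e.
      rewrite addrAC; apply/eqP; rewrite subr_eq0; apply/eqP.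
      rewrite [N _ + _]addrC -addrA in e; by move/addrI: e => ->.
    * move=> x y; have e := (ghom (s x) (s y)).2.
      rewrite hb_ss (linD gL) !gsE -gi hb_si -addrA in e.
      move/addrI: e; rewrite -(linD iL) => /iI e.
      rewrite addrAC; apply/eqP; rewrite subr_eq0; apply/eqP.
      rewrite [N _ + _]addrC -addrA in e; by move/addrI: e => ->.
  + have gen x p : g (s x + i p) = iotaZ i j N (s x + i p).
      by rewrite gsi /iotaZ j_si (linD iL) addrA addrAC.
    by move=> w; rewrite (decomp w); apply: gen.
- case=> N [HN gE]; have [_ [[T1 T2] _]] := part1 HN.
  by split => [u|x]; rewrite gE; [exact: T1 | exact: T2].
Qed.


Lemma ac1 (M : zmodType) (m1 fs m2 P m3 m4 : M) :
  m1 - fs + m2 + P + m3 + m4 + fs = P + (m3 + m1) + (m4 + m2).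
Proof. by rewrite (ACl (4*5*1*6*3*2*7)) /= subrK !addrA. Qed.

Lemma ac2 (M : zmodType) (P mx my fs : M) :
  P + mx + my - fs - P = mx - fs + my.
Proof. by rewrite (ACl (5*1*2*4*3)) /= addNr add0r. Qed.

Lemma part5a g b a : AutV hs hb i g -> tau_rel i j s g b a ->
  wells_zero st bu mu l r phi psi b a.
Proof.
move=> Hg T; have [_ [[aL [_ ahom]] _]] := autv_inC Hg T.
case: Hg => gL [_ [ghom _]]; case: T => hbE haE.
move=> ainv aK ainvK.
have ainvL := lin_inv aL aK ainvK.
pose f x := invi (g (s (ainv x)) - s x).
have fE x : i (f x) = g (s (ainv x)) - s x.
  by apply: invi_ker; rewrite (linB jL) js -haE ainvK subrr.
have gsf x : g (s (ainv x)) = s x + i (f x) by rewrite fE addrC subrK.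
have ainv_st x y : ainv (st x y) = st (ainv x) (ainv y).
  by apply: (can_inj aK); rewrite ainvK (ahom _ _).1 !ainvK.
have ainv_bu x y : ainv (bu x y) = bu (ainv x) (ainv y).
  by apply: (can_inj aK); rewrite ainvK (ahom _ _).2 !ainvK.
exists f; split.
- move=> c x y; apply: iI; rewrite fE iL !fE ainvL sL gL sL.
  by rewrite scalerBr opprD addrACA.
- move=> x y; split; apply: iI.
  + rewrite (linB iL) hbE Hphi (linB gL) (ghom _ _).1 !gsf -ainv_st gsf hs_si.
    rewrite opprD addrACA subrr add0r -!(linB iL); congr (i _).
    exact: ac2.
  + rewrite (linB iL) hbE Hpsi (linB gL) (ghom _ _).2 !gsf -ainv_bu gsf hb_si.
    rewrite opprD addrACA subrr add0r -!(linB iL); congr (i _).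
    exact: ac2.
Qed.

Lemma part5b b a : inC st bu mu l r b a -> wells_zero st bu mu l r phi psi b a ->
  exists g, AutV hs hb i g /\ tau_rel i j s g b a.
Proof.
case=> [[bL [binv bK binvK]] [[aL [[ainv aK ainvK] ahom]] comp]] W.
have [f [fL fE]] := W ainv aK ainvK.
have cmu x u : b (mu x u) = mu (a x) (b u) by case: (comp x u).
have cl x u : b (l x u) = l (a x) (b u) by case: (comp x u).
have cr x u : b (r x u) = r (a x) (b u) by case: (comp x u).
pose g w := s (a (j w)) + i (b (pi w) + f (a (j w))).
have gsi x u : g (s x + i u) = s (a x) + i (b u + f (a x)) by rewrite /g j_si pi_si.
have gi u : g (i u) = i (b u).
  by rewrite -[i u]add0r -(lin0 sL) gsi (lin0 aL) (lin0 sL) (lin0 fL) add0r addr0.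
exists g; split.
- split; [|split; [|split; [|split]]].
  + apply: lin_add; first exact: (lin_comp (lin_comp jL aL) sL).
    apply: lin_comp iL; exact: (lin_add (lin_comp pi_lin bL) (lin_comp (lin_comp jL aL) fL)).
  + exists (fun w => s (ainv (j w)) + i (binv (pi w - f (j w)))) => w /=.
    * by rewrite /g j_si pi_si aK addrK bK -decomp.
    * by rewrite gsi ainvK binvK subrK -decomp.
  + move=> w w'; rewrite (decomp w) (decomp w').
    move: (j w) (pi w) (j w') (pi w') => x p y q.
    split.
    * rewrite hs_si !gsi hs_si (ahom _ _).1; congr (_ + i _).
      rewrite !(linD bL) !cmu !(linD (muL _)).
      have := (fE (a x) (a y)).1; rewrite !aK => /eqP; rewrite subr_eq => /eqP ->.
      exact: ac1.
    * rewrite hb_si !gsi hb_si (ahom _ _).2; congr (_ + i _).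
      rewrite !(linD bL) cl cr !(linD (lL _)) !(linD (rL _)).
      have := (fE (a x) (a y)).2; rewrite !aK => /eqP; rewrite subr_eq => /eqP ->.
      exact: ac1.
  + by move=> u; exists (b u); rewrite gi.
  + by move=> u; exists (binv u); rewrite gi binvK.
- split => [u|x]; first by rewrite gi.
  by rewrite -[s x]addr0 -i0 gsi j_si.
Qed.


Lemma main_all :
  [/\ (forall N, Z1 st bu mu l r N ->
         AutV hs hb i (iotaZ i j N) /\ tau_rel i j s (iotaZ i j N) id id /\
         (forall x, iotaZ i j N (s x) - s x = i (N x))),
      (forall N1 N2, Z1 st bu mu l r N1 -> Z1 st bu mu l r N2 ->
         (forall w, iotaZ i j N1 w = iotaZ i j N2 w) -> forall x, N1 x = N2 x) /\
      (forall N1 N2, Z1 st bu mu l r N1 -> Z1 st bu mu l r N2 ->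
         forall w, iotaZ i j (fun x => N1 x + N2 x) w = iotaZ i j N1 (iotaZ i j N2 w)),
      (forall g, AutV hs hb i g ->
         exists b a, tau_rel i j s g b a /\ inC st bu mu l r b a),
      (forall g, AutV hs hb i g ->
         (tau_rel i j s g id id <->
          exists N, Z1 st bu mu l r N /\ forall w, g w = iotaZ i j N w))
    & (forall b a, (exists g, AutV hs hb i g /\ tau_rel i j s g b a) <->
                   inC st bu mu l r b a /\ wells_zero st bu mu l r phi psi b a)].
Proof.
split.
- exact: part1.
- split; [exact: part2a | exact: part2b].
- exact: autv_tau.
- exact: part4.
- move=> b a; split.
  + by case=> g [Hg T]; split; [exact: autv_inC Hg T | exact: part5a Hg T].
  + by case=> H1 H2; exact: part5b H1 H2.
Qed.

End Main.

Theorem theorem5p2 (F : fieldType) (A V Ah : lmodType F)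
  (st bu : A -> A -> A) (hs hb : Ah -> Ah -> Ah)
  (mu l r : A -> V -> V) (i : V -> Ah) (j : Ah -> A)
  (s : A -> Ah) (phi psi : A -> A -> V) :
  [pchar F] =i pred0 ->
  is_ComPreLie st bu ->
  is_rep st bu mu l r ->
  is_abelian_ext st bu hs hb i j ->
  induces_rep hs hb mu l r i j ->
  lin s -> (forall x, j (s x) = x) ->
  (forall x y, i (phi x y) = hs (s x) (s y) - s (st x y)) ->
  (forall x y, i (psi x y) = hb (s x) (s y) - s (bu x y)) ->
  [/\ (* iotaZ lands in Aut^A_V(Ah) and inverts g |-> g s - s *)
      (forall N, Z1 st bu mu l r N ->
         AutV hs hb i (iotaZ i j N) /\ tau_rel i j s (iotaZ i j N) id id /\
         (forall x, iotaZ i j N (s x) - s x = i (N x))),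
      (* iotaZ is an injective group homomorphism *)
      (forall N1 N2, Z1 st bu mu l r N1 -> Z1 st bu mu l r N2 ->
         (forall w, iotaZ i j N1 w = iotaZ i j N2 w) -> forall x, N1 x = N2 x) /\
      (forall N1 N2, Z1 st bu mu l r N1 -> Z1 st bu mu l r N2 ->
         forall w, iotaZ i j (fun x => N1 x + N2 x) w = iotaZ i j N1 (iotaZ i j N2 w)),
      (* tau is well defined with values in C *)
      (forall g, AutV hs hb i g ->
         exists b a, tau_rel i j s g b a /\ inC st bu mu l r b a),
      (* ker tau = iotaZ(Z^1) *)
      (forall g, AutV hs hb i g ->
         (tau_rel i j s g id id <->
          exists N, Z1 st bu mu l r N /\ forall w, g w = iotaZ i j N w))
    & (* image of tau = kernel of the Wells map *)
      (forall b a, (exists g, AutV hs hb i g /\ tau_rel i j s g b a) <->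
                   inC st bu mu l r b a /\ wells_zero st bu mu l r phi psi b a)].
Proof.
move=> _ _ [[muL _] [[lL _] [[rL _] _]]]
  [[[hsL hsR] [[hbL hbR] [hsC _]]] [iL [jL [iI [_ [kerj [z0 jhom]]]]]]]
  Hind sL js Hphi Hpsi.
have ind_mu x u : i (mu x u) = hs (s x) (i u) by case: (Hind s sL js x u).
have ind_l x u : i (l x u) = hb (s x) (i u) by case: (Hind s sL js x u) => _ [].
have ind_r x u : i (r x u) = hb (i u) (s x) by case: (Hind s sL js x u) => _ [].
by apply: main_all.
Qed.
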